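(* If $\Phi$ is of type $A_n$ or $C_n$, the set of standard parabolic facets of $\mathcal P_\Phi$ is the set of convex hulls $\operatorname{conv}(I)$ of the maximal abelian ideals $I$ of $\Phi^+$.
   Context: $\Phi$ is a finite irreducible crystallographic root system of rank $n$ with inner product $(-,-)$, basis $\Pi=\{\alpha_1,\dots,\alpha_n\}$ (Bourbaki numbering), positive roots $\Phi^+$, highest root $\theta=\sum_i m_i\alpha_i$; $\breve\omega_i$ is the fundamental coweight ($(\alpha_j,\breve\omega_i)=\delta_{ij}$). $\mathcal P_\Phi=\operatorname{conv}(\Phi)$. For $i\in[n]$, $F_i=\operatorname{conv}\{\beta\in\Phi^+\mid(\beta,\breve\omega_i)=m_i\}$ is a face of $\mathcal P_\Phi$; the standard parabolic facets are those $F_i$ that are facets (faces of dimension $n-1$) of $\mathcal P_\Phi$. The root poset is $\Phi^+$ with $\beta\ge\gamma$ iff $\beta-\gamma$ is a nonnegative integer combination of simple roots; an abelian ideal is a subset of $\Phi^+$ closed upward in the root poset with $(I+I)\cap\Phi=\emptyset$, and maximal means maximal under inclusion. *)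

(* Defs.v *)
From HB Require Import structures.
From mathcomp Require Import all_boot all_order all_algebra.
From mathcomp Require Import boolp classical_sets.

Set Implicit Arguments.
Unset Strict Implicit.
Unset Printing Implicit Defensive.

Import Order.TTheory GRing.Theory Num.Theory.
Local Open Scope ring_scope.
Local Open Scope classical_set_scope.

(* Roots are represented by their coordinate vectors in the basis of   *)
(* simple roots Pi = {alpha_1,...,alpha_n} (Bourbaki numbering; index  *)
(* k : 'I_n stands for alpha_(k+1)).  Thus for a root beta,            *)
(* (beta, breve-omega_i) = beta 0 i  (the coefficient of alpha_i).     *)

Inductive root_type := TypeA | TypeC.

Definition ind (b : bool) : int := if b then 1 else 0.

Definition posroot_A (n : nat) (beta : 'rV[int]_n) : Prop :=
  exists i j : 'I_n, (i <= j)%N /\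
    beta = \row_k ind ((i <= k)%N && (k <= j)%N).

(* Positive roots of C_n (Bourbaki: alpha_k = e_k - e_(k+1), k < n-1 (0-based),
   alpha_(n-1) = 2 e_(n-1)), written in simple-root coordinates:
   e_a - e_b (a < b)   = sum_(a <= k < b) alpha_k
   e_a + e_b (a < b)   = sum_(a <= k < b) alpha_k + 2 sum_(b <= k < n-1) alpha_k + alpha_(n-1)
   2 e_a               = 2 sum_(a <= k < n-1) alpha_k + alpha_(n-1).            *)
Definition posroot_C (n : nat) (beta : 'rV[int]_n) : Prop :=
  (exists a b : 'I_n, (a < b)%N /\
     beta = \row_k ind ((a <= k)%N && (k < b)%N))
  \/ (exists a b : 'I_n, (a < b)%N /\
     beta = \row_k (ind ((a <= k)%N && (k < b)%N)
                    + 2 * ind ((b <= k)%N && (k < n.-1)%N)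
                    + ind (k == n.-1 :> nat)))
  \/ (exists a : 'I_n,
     beta = \row_k (2 * ind ((a <= k)%N && (k < n.-1)%N)
                    + ind (k == n.-1 :> nat))).

Definition posroot (t : root_type) (n : nat) (beta : 'rV[int]_n) : Prop :=
  match t with TypeA => posroot_A beta | TypeC => posroot_C beta end.

Definition root (t : root_type) (n : nat) (beta : 'rV[int]_n) : Prop :=
  posroot t beta \/ posroot t (- beta).

(* Root poset: gamma <= beta iff beta - gamma is a nonnegative integer
   combination of simple roots, i.e. all its coordinates are >= 0. *)
Definition rp_le (n : nat) (gamma beta : 'rV[int]_n) : Prop :=
  forall k, gamma 0 k <= beta 0 k.

Definition highest_root (t : root_type) (n : nat) (theta : 'rV[int]_n) : Prop :=
  posroot t theta /\ forall gamma, posroot t gamma -> rp_le gamma theta.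

Definition abelian_ideal (t : root_type) (n : nat) (I : set 'rV[int]_n) : Prop :=
  [/\ (forall beta, I beta -> posroot t beta),
      (forall beta gamma, I beta -> posroot t gamma -> rp_le beta gamma -> I gamma)
    & (forall beta gamma, I beta -> I gamma -> ~ root t (beta + gamma))].

Definition maximal_abelian_ideal (t : root_type) (n : nat) (I : set 'rV[int]_n)
  : Prop :=
  abelian_ideal t I /\
  forall J, abelian_ideal t J -> I `<=` J -> J = I.

Definition emb (R : realFieldType) (n : nat) (beta : 'rV[int]_n) : 'rV[R]_n :=
  map_mx (fun z : int => z%:~R) beta.

Definition dotv (R : realFieldType) (n : nat) (c x : 'rV[R]_n) : R :=
  (c *m x^T) 0 0.

Definition conv (R : realFieldType) (n : nat) (S : set 'rV[R]_n) : set 'rV[R]_n :=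
  [set x | exists (k : nat) (p : 'I_k -> 'rV[R]_n) (w : 'I_k -> R),
      [/\ forall j, S (p j), forall j, 0 <= w j, \sum_(j < k) w j = 1
        & x = \sum_(j < k) w j *: p j]].

Definition is_face (R : realFieldType) (n : nat) (P F : set 'rV[R]_n) : Prop :=
  exists (c : 'rV[R]_n) (b : R),
    (forall x, P x -> dotv c x <= b) /\ F = [set x | P x /\ dotv c x = b].

Definition affdim_ge (R : realFieldType) (n : nat) (S : set 'rV[R]_n) (d : nat)
  : Prop :=
  exists p : 'I_d.+1 -> 'rV[R]_n,
    (forall j, S (p j)) /\
    \rank (\matrix_(j < d) (p (lift ord0 j) - p ord0)) = d.

Definition affdim_eq (R : realFieldType) (n : nat) (S : set 'rV[R]_n) (d : nat)
  : Prop :=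
  affdim_ge S d /\ ~ affdim_ge S d.+1.

Definition is_facet (R : realFieldType) (n : nat) (P F : set 'rV[R]_n) : Prop :=
  is_face P F /\ affdim_eq F n.-1.

Definition root_polytope (R : realFieldType) (t : root_type) (n : nat)
  : set 'rV[R]_n :=
  conv [set emb R beta | beta in [set beta | root t beta]].

(* F_i = conv{ beta in Phi^+ | (beta, breve-omega_i) = m_i }, theta = sum m_i alpha_i. *)
Definition Fi (R : realFieldType) (t : root_type) (n : nat) (theta : 'rV[int]_n)
  (i : 'I_n) : set 'rV[R]_n :=
  conv [set emb R beta | beta in [set beta | posroot t beta /\ beta 0 i = theta 0 i]].
Arguments Fi R t n theta i : clear implicits.
Arguments root_polytope R t n : clear implicits.

(* Main.v *)
Require Import Defs.
From HB Require Import structures.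
From mathcomp Require Import all_boot all_order all_algebra.
From mathcomp Require Import boolp classical_sets.
From mathcomp Require Import zify ring lra.
Set Implicit Arguments.
Unset Strict Implicit.
Import Order.TTheory GRing.Theory Num.Theory.
Local Open Scope ring_scope.
Local Open Scope classical_set_scope.

Definition ivn n (a b : nat) : 'rV[int]_n := \row_k ind ((a <= k) && (k <= b))%N.
Definition c1 n (a b : nat) : 'rV[int]_n := \row_k ind ((a <= k) && (k < b))%N.
Definition c2 n (a b : nat) : 'rV[int]_n :=
  \row_k (ind ((a <= k)%N && (k < b)%N) + 2 * ind ((b <= k)%N && (k < n.-1)%N)
                    + ind (k == n.-1 :> nat)).
Definition c3 n (a : nat) : 'rV[int]_n :=
  \row_k (2 * ind ((a <= k)%N && (k < n.-1)%N) + ind (k == n.-1 :> nat)).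
Definition th t n : 'rV[int]_n :=
  match t with TypeA => ivn n 0 n.-1 | TypeC => c3 n 0 end.

Ltac indt := rewrite /ind; repeat (case: ifP => ?); lia.

Lemma posA n β : posroot_A β <->
  exists a b : nat, [/\ (a <= b)%N, (b < n)%N & β = ivn n a b].
Proof.
split.
  by case=> [i [j [ij ->]]]; exists i, j; split.
case=> [a [b [ab bn ->]]].
have an : (a < n)%N by lia.
by exists (Ordinal an), (Ordinal bn).
Qed.

Lemma posC n β : posroot_C β <->
  (exists a b : nat, [/\ (a < b)%N, (b < n)%N & β = c1 n a b]) \/
  (exists a b : nat, [/\ (a < b)%N, (b < n)%N & β = c2 n a b]) \/
  (exists a : nat, (a < n)%N /\ β = c3 n a).
Proof.
split.
  case=> [[i [j [ij ->]]]|[[i [j [ij ->]]]|[i ->]]].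
  - by left; exists i, j.
  - by right; left; exists i, j.
  - by right; right; exists i.
case=> [[a [b [ab bn ->]]]|[[a [b [ab bn ->]]]|[a [an ->]]]].
- have an : (a < n)%N by lia.
  by left; exists (Ordinal an), (Ordinal bn).
- have an : (a < n)%N by lia.
  by right; left; exists (Ordinal an), (Ordinal bn).
- by right; right; exists (Ordinal an).
Qed.

Lemma pos_bound t n β : posroot t β -> forall k, 0 <= β 0 k <= th t n 0 k.
Proof.
case: t => /=.
  case/posA=> [a [b [ab bn ->]]] k; rewrite !mxE.
  have := ltn_ord k; indt.
case/posC=> [[a [b [ab bn ->]]]|[[a [b [ab bn ->]]]|[a [an ->]]]] k; rewrite !mxE;
  have := ltn_ord k; indt.
Qed.

Lemma th_pos t n : (0 < n)%N -> posroot t (th t n).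
Proof.
move=> n0; case: t => /=.
  by apply/posA; exists 0%N, n.-1; split=> //; lia.
by apply/posC; right; right; exists 0%N.
Qed.

Lemma th_gt0 t n (k : 'I_n) : 0 < th t n 0 k.
Proof. have := ltn_ord k; case: t; rewrite /= !mxE; indt. Qed.

Lemma highest_th t n θ : (0 < n)%N -> highest_root t θ -> θ = th t n.
Proof.
move=> n0 [Pθ Hθ]; apply/rowP => k.
have := Hθ _ (@th_pos t n n0) k; have /andP[_ h] := pos_bound Pθ k.
move=> h2; apply/eqP; rewrite eq_le h h2 //.
Qed.

Lemma root_bound t n (β : 'rV[int]_n) (k : 'I_n) : Defs.root t β -> β 0 k <= th t n 0 k.
Proof.
case=> [/pos_bound/(_ k)/andP[] //|/pos_bound/(_ k)/andP[]].
rewrite mxE oppr_ge0 => h _; apply: le_trans h _; exact: ltW (th_gt0 _ _).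
Qed.

Definition Ii t n (i : 'I_n) : set 'rV[int]_n :=
  [set β | posroot t β /\ β 0 i = th t n 0 i].

Lemma Ii_ab t n i : abelian_ideal t (@Ii t n i).
Proof.
split.
- by move=> b [].
- move=> b g [Pb Eb] Pg le; split=> //.
  have /andP[_ h] := pos_bound Pg i.
  by apply/eqP; rewrite eq_le h -Eb le.
- move=> b g [_ Eb] [_ Eg] /(root_bound i); rewrite mxE Eb Eg.
  have := th_gt0 t i; set x := th t n 0 i => x0; lra.
Qed.

Lemma ivn_add n a b c d : (a <= c)%N -> c = b.+1 -> (b <= d)%N ->
  ivn n a b + ivn n c d = ivn n a d.
Proof. move=> *; subst; apply/rowP => k; rewrite !mxE; indt. Qed.

Lemma ivn_le n a b a' b' : (a' <= a)%N -> (b <= b')%N ->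
  rp_le (ivn n a b) (ivn n a' b').
Proof. move=> *; move=> k; rewrite !mxE; indt. Qed.

Lemma ivn_pos n a b : (a <= b)%N -> (b < n)%N -> posroot TypeA (ivn n a b).
Proof. by move=> *; apply/posA; exists a, b. Qed.

Lemma ivn_root n a b : (a <= b)%N -> (b < n)%N -> Defs.root TypeA (ivn n a b).
Proof. by move=> *; left; apply: ivn_pos. Qed.

Lemma thA n (i : 'I_n) : th TypeA n 0 i = 1.
Proof. rewrite /= mxE; have := ltn_ord i; indt. Qed.

Lemma A_contain n (J : set 'rV[int]_n) (i : 'I_n) :
  abelian_ideal TypeA J -> J (ivn n i i) -> forall β, J β -> β 0 i = 1.
Proof.
case=> Jp Ju Ja Ji β Jb.
have := Jp _ Jb; case/posA=> [a [b [ab bn Eb]]].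
have ilt := ltn_ord i.
case: (ltnP b i) => bi.
  have Jg : J (ivn n a i.-1).
    by apply: (Ju β); [|apply: ivn_pos; lia|rewrite Eb; apply: ivn_le; lia].
  case: (Ja _ _ Jg Ji); rewrite ivn_add; try lia.
  by apply: ivn_root; lia.
case: (ltnP i a) => ia.
  have Jg : J (ivn n i.+1 b).
    by apply: (Ju β); [|apply: ivn_pos; lia|rewrite Eb; apply: ivn_le; lia].
  case: (Ja _ _ Ji Jg); rewrite ivn_add; try lia.
  by apply: ivn_root; lia.
rewrite Eb mxE; indt.
Qed.

Lemma A_exists n (I : set 'rV[int]_n) : (0 < n)%N ->
  abelian_ideal TypeA I -> exists i : 'I_n, forall β, I β -> β 0 i = 1.
Proof.
move=> n0 [Ip Iu Ia].
case: (pselect (exists β, I β)) => [[β0 Ib0]|nI]; last first.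
  by exists (Ordinal n0) => β Ib; case: nI; exists β.
pose P k := `[< exists a, [/\ I (ivn n a k), (a <= k)%N & (k < n)%N] >].
have exP : exists k, P k.
  have := Ip _ Ib0; case/posA=> [a [b [ab bn Eb]]].
  by exists b; apply/asboolP; exists a; rewrite -Eb.
case: (ex_minnP exP) => i /asboolP [a0 [Ia0 a0i iln]] imin.
exists (Ordinal iln) => β Ib /=.
have := Ip _ Ib; case/posA=> [a [b [ab bn Eb]]].
have ib : (i <= b)%N by apply: imin; apply/asboolP; exists a; rewrite -Eb.
case: (ltnP i a) => ia.
  have Jg : I (ivn n a0 a.-1).
    by apply: (Iu _ _ Ia0); [apply: ivn_pos; lia|apply: ivn_le; lia].
  case: (Ia _ _ Jg Ib); rewrite Eb ivn_add; try lia.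
  by apply: ivn_root; lia.
by rewrite Eb mxE /= ia ib.
Qed.

Lemma c12_le n a b : rp_le (c1 n a b) (c2 n a b).
Proof. move=> k; rewrite !mxE; indt. Qed.

Lemma c12_add n a b : (a < b)%N -> (b < n)%N -> c1 n a b + c2 n a b = c3 n a.
Proof. move=> *; apply/rowP => k; rewrite !mxE; have := ltn_ord k; indt. Qed.

Lemma C_contain n (J : set 'rV[int]_n) :
  abelian_ideal TypeC J -> forall β, J β -> forall k : 'I_n,
  (k == n.-1 :> nat) -> β 0 k = th TypeC n 0 k.
Proof.
case=> Jp Ju Ja β Jb k /eqP kn.
have := Jp _ Jb; case/posC=> [[a [b [ab bn Eb]]]|[[a [b [ab bn Eb]]]|[a [an Eb]]]].
- have Jg : J (c2 n a b).
    by apply: (Ju β) => //; [apply/posC; right; left; exists a, b|rewrite Eb; apply: c12_le].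
  case: (Ja _ _ Jb Jg); rewrite Eb c12_add //.
  by left; apply/posC; right; right; exists a; split=> //; lia.
- rewrite Eb /= !mxE; indt.
- rewrite Eb /= !mxE; indt.
Qed.

Lemma thC n (k : 'I_n) : (k == n.-1 :> nat) -> th TypeC n 0 k = 1.
Proof. move=> /eqP kn; rewrite /= mxE; indt. Qed.

Section Geo.
Variable R : realFieldType.

Lemma conv_in n (S : set 'rV[R]_n) x : S x -> conv S x.
Proof.
move=> Sx; exists 1%N, (fun=> x), (fun=> 1); split=> //.
  by rewrite big_ord1.
by rewrite big_ord1 scale1r.
Qed.

Lemma conv_mono n (S T : set 'rV[R]_n) : S `<=` T -> conv S `<=` conv T.
Proof.
move=> ST x [k [p [w [Sp w0 w1 ->]]]]; exists k, p, w; split=> // j.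
exact: ST.
Qed.

Lemma coord_sum n k (p : 'I_k -> 'rV[R]_n) w (i : 'I_n) :
  (\sum_(j < k) w j *: p j) 0 i = \sum_(j < k) w j * p j 0 i.
Proof. by rewrite summxE; apply: eq_bigr => j _; rewrite mxE. Qed.

Lemma conv_le n (S : set 'rV[R]_n) (i : 'I_n) c :
  (forall y, S y -> y 0 i <= c) -> forall x, conv S x -> x 0 i <= c.
Proof.
move=> H x [k [p [w [Sp w0 w1 ->]]]]; rewrite coord_sum.
apply: (@le_trans _ _ (\sum_(j < k) w j * c)).
  by apply: ler_sum => j _; apply: ler_wpM2l => //; apply: H.
by rewrite -big_distrl /= w1 mul1r.
Qed.

Lemma conv_eq n (S : set 'rV[R]_n) (i : 'I_n) c :
  (forall y, S y -> y 0 i = c) -> forall x, conv S x -> x 0 i = c.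
Proof.
move=> H x [k [p [w [Sp w0 w1 ->]]]]; rewrite coord_sum.
rewrite (eq_bigr (fun j => w j * c)); last by move=> j _; rewrite H.
by rewrite -big_distrl /= w1 mul1r.
Qed.

Lemma emb_coord n (β : 'rV[int]_n) i : emb R β 0 i = (β 0 i)%:~R.
Proof. by rewrite mxE. Qed.

Lemma dot_delta n (i : 'I_n) (x : 'rV[R]_n) : dotv (delta_mx 0 i) x = x 0 i.
Proof. by rewrite /dotv -rowE !mxE. Qed.

Lemma face_Fi t n (i : 'I_n) :
  (0 < n)%N -> is_face (root_polytope R t n) (Fi R t n (th t n) i).
Proof.
move=> n0.
have bnd : forall x, root_polytope R t n x -> x 0 i <= (th t n 0 i)%:~R.
  apply: conv_le => y [β Rb <-]; rewrite emb_coord ler_int.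
  exact: root_bound.
exists (delta_mx 0 i), (th t n 0 i)%:~R; split.
  by move=> x Px; rewrite dot_delta; apply: bnd.
apply/seteqP; split => x.
  move=> Fx; rewrite /= dot_delta; split.
    apply: conv_mono Fx => y [β [Pb _] <-]; exists β => //; by left.
  apply: conv_eq Fx => y [β [_ Eb] <-]; by rewrite emb_coord Eb.
rewrite /= dot_delta => -[[k [p [w [Sp w0 w1 Ex]]]] xi].
set b := (th t n 0 i)%:~R : R.
have Hz : forall j, w j * (b - p j 0 i) = 0.
  move=> j0; apply: (psumr_eq0P (P := xpredT) (F := fun j => w j * (b - p j 0 i))) => // [j _|].
    rewrite mulr_ge0 // subr_ge0; apply: bnd; apply: conv_in; exact: Sp.
  rewrite (eq_bigr (fun j => w j * b - w j * p j 0 i)); last by move=> j _; rewrite mulrBr.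
  rewrite sumrB -big_distrl /= w1 mul1r -coord_sum -Ex xi subrr //.
pose q j := if p j 0 i == b then p j else emb R (th t n).
exists k, q, w; split=> //.
  move=> j; rewrite /q; case: ifP => [/eqP pb|_].
    have [β Rb Eb] := Sp j; exists β => //; split.
      case: Rb => // Nb; exfalso.
      have /andP[h _] := pos_bound Nb i; move: h; rewrite mxE oppr_ge0.
      move: pb; rewrite -Eb emb_coord /b => /eqP; rewrite eqr_int => /eqP ->.
      by rewrite leNgt th_gt0.
    by move: pb; rewrite -Eb emb_coord /b => /eqP; rewrite eqr_int => /eqP.
  by exists (th t n) => //; split=> //; apply: th_pos.
rewrite Ex; apply: eq_bigr => j _; rewrite /q; case: ifP => // /negbT pb.
have := Hz j; move/eqP; rewrite mulf_eq0 subr_eq0 [b == _]eq_sym (negbTE pb) orbF.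
by move/eqP ->; rewrite !scale0r.
Qed.

Lemma rank_col0 d n (M : 'M[R]_(d, n)) (i : 'I_n) :
  (forall j, M j i = 0) -> (\rank M < n)%N.
Proof.
move=> H.
have K : ((delta_mx 0 i : 'rV[R]_n) <= kermx M^T)%MS.
  apply/sub_kermxP; rewrite -rowE; apply/rowP => j; rewrite !mxE; exact: H.
have := mxrankS K; rewrite mxrank_delta mxrank_ker mxrank_tr => h.
lia.
Qed.

Lemma rank_cols0 d n (M : 'M[R]_(d, n)) (i : nat) : (i <= n)%N ->
  (forall j (k : 'I_n), (i <= k)%N -> M j k = 0) -> (\rank M <= i)%N.
Proof.
move=> iN H.
have -> : M = M *m pid_mx i.
  apply/matrixP => j k; rewrite !mxE (bigD1 k) //= big1 => [|l /negbTE lk].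
    rewrite !mxE eqxx /=; case: (ltnP k i) => ki; first by rewrite mulr1 addr0.
    by rewrite H // mul0r addr0.
  by rewrite !mxE; case: eqP => [/val_inj/eqP|]; rewrite ?lk //= mulr0.
by apply: leq_trans (mxrankM_maxr _ _) _; rewrite rank_pid_mx.
Qed.

Lemma rank_trig m (M : 'M[R]_(m, m.+1)) (i : 'I_m.+1) :
  (forall j l : 'I_m, (j < l)%N -> M j (lift i l) = 0) ->
  (forall j, M j (lift i j) != 0) -> \rank M = m.
Proof.
move=> Hz Hd.
pose S : 'M[R]_(m.+1, m) := \matrix_(k, l) ((k == lift i l)%:R).
have E : M *m S = \matrix_(j, l) M j (lift i l).
  apply/matrixP => j l; rewrite !mxE (bigD1 (lift i l)) //= big1 => [|k /negbTE kl].
    by rewrite !mxE eqxx mulr1 addr0.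
  by rewrite !mxE kl mulr0.
have U : \rank (M *m S) = m.
  rewrite E; apply: mxrank_unit; rewrite unitmxE unitfE det_trig.
    by apply/prodf_neq0 => j _; rewrite mxE.
  by apply/is_trig_mxP => j l jl; rewrite mxE Hz.
apply/eqP; rewrite eqn_leq rank_leq_row /= -{1}U; exact: mxrankM_maxl.
Qed.

Lemma not_affdim n (F : set 'rV[R]_n) (i : 'I_n) c :
  (forall y, F y -> y 0 i = c) -> ~ affdim_ge F n.
Proof.
move=> H [p [Fp Rk]].
have : (\rank (\matrix_(j < n) (p (lift ord0 j) - p ord0)) < n)%N.
  by apply: (@rank_col0 _ _ _ i) => j; rewrite !mxE !H // subrr.
by rewrite Rk ltnn.
Qed.

End Geo.

Section Facets.
Variable R : realFieldType.

Lemma ent_eq0 (z : int) : z = 0 -> (z%:~R : R) = 0.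
Proof. by move->. Qed.
Lemma ent_neq0 (z : int) : z != 0 -> (z%:~R : R) != 0.
Proof. by rewrite intr_eq0. Qed.

Lemma facetA_dim m (i : 'I_m.+1) :
  affdim_ge (Fi R TypeA m.+1 (th TypeA m.+1) i) m.
Proof.
pose pts (j : 'I_m.+1) : 'rV[int]_m.+1 :=
  \row_k (if (j <= i)%N then ind ((j <= k) && (k <= i))%N else ind (k <= j)%N).
exists (fun j => emb R (pts j)); split.
  move=> j; apply: conv_in; exists (pts j) => //; split.
    case: (leqP j i) => ji.
      suff -> : pts j = ivn m.+1 j i by apply: ivn_pos.
      by apply/rowP => k; rewrite !mxE ji.
    suff -> : pts j = ivn m.+1 0 j by apply: ivn_pos => //; apply: ltn_ord.
    by apply/rowP => k; rewrite !mxE leqNgt ji.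
  rewrite thA !mxE; have := ltn_ord j; indt.
apply: (@rank_trig _ _ _ i).
  move=> j l jl; rewrite !mxE -intrB; apply: ent_eq0.
  rewrite lift0 /= /bump; have := ltn_ord l; have := ltn_ord i; case: (leqP i l) => /= il; indt.
move=> j; rewrite !mxE -intrB; apply: ent_neq0.
rewrite lift0 /= /bump; have := ltn_ord j; have := ltn_ord i; case: (leqP i j) => /= il; indt.
Qed.

Lemma facetC_dim m :
  affdim_ge (Fi R TypeC m.+1 (th TypeC m.+1) ord_max) m.
Proof.
exists (fun j : 'I_m.+1 => emb R (c3 m.+1 j)); split.
  move=> j; apply: conv_in; exists (c3 m.+1 j) => //; split.
    by apply/posC; right; right; exists j.
  rewrite /= !mxE (_ : nat_of_ord (@ord_max m) = m) //; have := ltn_ord j; indt.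
apply: (@rank_trig _ _ _ ord_max).
  move=> j l jl; rewrite !mxE -intrB; apply: ent_eq0.
  rewrite lift0 /= /bump; rewrite [(m <= l)%N]leqNgt ltn_ord /= add0n; have := ltn_ord l; indt.
move=> j; rewrite !mxE -intrB; apply: ent_neq0.
rewrite lift0 /= /bump; rewrite [(m <= j)%N]leqNgt ltn_ord /= add0n; have := ltn_ord j; indt.
Qed.

End Facets.

Lemma C_fixed n (β : 'rV[int]_n) (i : 'I_n) : posroot TypeC β ->
  β 0 i = th TypeC n 0 i -> (i < n.-1)%N ->
  forall k : 'I_n, (i <= k)%N -> β 0 k = th TypeC n 0 k.
Proof.
case/posC=> [[a [b [ab bn ->]]]|[[a [b [ab bn ->]]]|[a [an ->]]]];
  rewrite /= !mxE => E il k ik; move: E; rewrite !mxE; have := ltn_ord k; indt.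
Qed.

Lemma C_notfacet (R : realFieldType) m (i : 'I_m.+1) : (i < m)%N ->
  ~ affdim_ge (Fi R TypeC m.+1 (th TypeC m.+1) i) m.
Proof.
move=> im [p [Fp Rk]].
have H : forall y, Fi R TypeC m.+1 (th TypeC m.+1) i y ->
    forall k : 'I_m.+1, (i <= k)%N -> y 0 k = (th TypeC m.+1 0 k)%:~R.
  move=> y Fy k ik; apply: conv_eq Fy => z [β [Pb Eb] <-].
  by rewrite emb_coord (@C_fixed _ β i).
have : (\rank (\matrix_(j < m) (p (lift ord0 j) - p ord0)) <= i)%N.
  apply: rank_cols0; first by apply: ltnW; apply: ltn_ord.
  by move=> j k ik; rewrite !mxE !(H _ (Fp _)) // subrr.
rewrite Rk; lia.
Qed.

Theorem theorem5p7 (R : realFieldType) (t : root_type) (n : nat)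
  (theta : 'rV[int]_n) :
  (0 < n)%N -> highest_root t theta ->
  forall F : set 'rV[R]_n,
    (exists i : 'I_n, F = Fi R t n theta i /\ is_facet (root_polytope R t n) F)
    <->
    (exists I : set 'rV[int]_n,
       maximal_abelian_ideal t I /\ F = conv [set emb R beta | beta in I]).
Proof.
move=> n0 /(highest_th n0) -> {theta}; case: n n0 => [//|m] _ F; split.
  case=> i [-> [_ [dim _]]]; case: t dim => dim.
    exists (Ii TypeA i); split=> //; split; first exact: Ii_ab.
    move=> J Jab IJ; apply/seteqP; split=> // β Jb.
    have Ji : J (ivn m.+1 i i).
      apply: IJ; split; first by apply: ivn_pos.
      by rewrite thA mxE; indt.
    split; first by case: Jab => + _ _; apply.
    by rewrite thA; apply: (A_contain Jab Ji).
  case: (eqVneq i ord_max) => [ei|ni]; last first.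
    exfalso; apply: (@C_notfacet R m i) (dim).
    have := ltn_ord i; move: ni; rewrite -val_eqE /=; lia.
  subst i; exists (Ii TypeC ord_max); split=> //; split; first exact: Ii_ab.
  move=> J Jab IJ; apply/seteqP; split=> // β Jb.
  split; first by case: Jab => + _ _; apply.
  exact: (C_contain Jab Jb).
case=> I [[Iab Imax] ->]; case: t Iab Imax => Iab Imax.
  have [i Hi] := A_exists (ltn0Sn m) Iab.
  have E : Ii TypeA i = I.
    apply: Imax; first exact: Ii_ab.
    move=> β Ib; split; first by case: Iab => + _ _; apply.
    by rewrite thA Hi.
  exists i; rewrite -E; split=> //; split.
    exact: face_Fi.
  split; first exact: facetA_dim.
  apply: (@not_affdim R m.+1 _ i ((th TypeA m.+1 0 i)%:~R)) => y;
    by apply: conv_eq => z [β [_ Eb] <-]; rewrite emb_coord Eb.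
have E : Ii TypeC ord_max = I.
  apply: Imax; first exact: Ii_ab.
  move=> β Ib; split; first by case: Iab => + _ _; apply.
  exact: (C_contain Iab Ib).
exists ord_max; rewrite -E; split=> //; split.
  exact: face_Fi.
split; first exact: facetC_dim.
apply: (@not_affdim R m.+1 _ ord_max ((th TypeC m.+1 0 ord_max)%:~R)) => y;
  by apply: conv_eq => z [β [_ Eb] <-]; rewrite emb_coord Eb.
Qed.
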